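(* Let $\Phi$ be a symbol of the form $\Phi(s)=c_0s+\phi(s)$ (with $c_0$ a non-negative integer and $\phi$ a convergent Dirichlet series) such that $D_\Phi f=f'\circ\Phi$ is a bounded operator on $\mathcal{H}^2$. Then $D_\Phi$ is self-adjoint on $\mathcal{H}^2$ if, and only if, $\Phi(s)=s+c_1$ for some real constant $c_1$.
   Context: $\mathcal{H}^2$ is the Hilbert space of Dirichlet series $f(s)=\sum_{n\ge1}a_nn^{-s}$ with $\|f\|_{\mathcal{H}^2}^2=\sum_n|a_n|^2<\infty$, with inner product $\langle f,g\rangle=\sum a_n\overline{b_n}$. *)

(* Defs.v *)
From Stdlib Require Import Reals.
From Coquelicot Require Import Coquelicot.
Open Scope R_scope.

(* Convention: a Dirichlet series sum_{n>=1} a_n n^{-s} is represented by the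
   coefficient sequence  a : nat -> C  with  a k  the coefficient of (k+1)^{-s}. *)

(* n^{-s} for a positive integer n and complex s = sigma + i t:
   n^{-s} = exp(-sigma log n) (cos(t log n) - i sin(t log n)). *)
Definition npow_neg (n : nat) (s : C) : C :=
  (exp (- Re s * ln (INR n)) * cos (Im s * ln (INR n)),
   - (exp (- Re s * ln (INR n)) * sin (Im s * ln (INR n)))).

Definition dterm (a : nat -> C) (s : C) (k : nat) : C :=
  Cmult (a k) (npow_neg (S k) s).

Definition DS_has (a : nat -> C) (s : C) (v : C) : Prop :=
  is_series (dterm a s) v.

Definition dderiv (a : nat -> C) (k : nat) : C :=
  Cmult (a k) (RtoC (- ln (INR (S k)))).

Definition in_H2 (a : nat -> C) : Prop :=
  ex_series (fun k => (Cmod (a k))^2).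

Definition H2norm (a : nat -> C) : R :=
  sqrt (Series (fun k => (Cmod (a k))^2)).

Definition H2inner (a b : nat -> C) : C :=
  (Series (fun k => Re (Cmult (a k) (Cconj (b k)))),
   Series (fun k => Im (Cmult (a k) (Cconj (b k))))).

(* The symbol Phi(s) = c0 s + phi(s), phi with coefficients b.
   DPhi_rel c0 b f g : g in H^2 and g = f' o Phi on some right half-plane
   (where phi converges, Re Phi(s) > 1/2 so that f'(Phi(s)) converges). *)
Definition DPhi_rel (c0 : nat) (b : nat -> C) (f g : nat -> C) : Prop :=
  in_H2 g /\
  exists sigma0 : R, forall s : C, sigma0 < Re s ->
    exists p : C, DS_has b s p /\
      let w := Cplus (Cmult (RtoC (INR c0)) s) p in
      1/2 < Re w /\
      exists v : C, DS_has g s v /\ DS_has (dderiv f) w v.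

Definition DPhi_bounded (c0 : nat) (b : nat -> C) : Prop :=
  exists M : R, forall f, in_H2 f ->
    exists g, DPhi_rel c0 b f g /\ H2norm g <= M * H2norm f.

Definition DPhi_selfadjoint (c0 : nat) (b : nat -> C) : Prop :=
  forall f h g k, in_H2 f -> in_H2 h ->
    DPhi_rel c0 b f g -> DPhi_rel c0 b h k ->
    H2inner g h = H2inner f k.

(* Main.v *)
Require Import Defs.
From Stdlib Require Import Reals.
From Coquelicot Require Import Coquelicot.
From Stdlib Require Import Lra Lia ZArith.
Open Scope R_scope.


Lemma CS_eps (a : nat -> C) (l : C) : is_series a l ->
  forall eps, 0 < eps -> exists N0, forall N, (N0 <= N)%nat ->
    Cmod (Cminus (sum_n a N) l) < eps.
Proof.
  intros H eps Heps.
  assert (Hs : 0 < eps / 2) by lra.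
  destruct (proj1 (filterlim_locally (sum_n a) l) H (mkposreal _ Hs)) as [N0 HN].
  exists N0. intros N HN0. specialize (HN N HN0).
  apply C_NormedModule_mixin_compat2 in HN. simpl in HN.
  assert (sqrt 2 < 2).
  { rewrite <- (sqrt_square 2) at 2 by lra. apply sqrt_lt_1; lra. }
  change (Cmod (minus (sum_n a N) l) < eps).
  apply Rlt_le_trans with (1 := HN). 
  assert (0 < eps / 2) by lra. nra.
Qed.

Lemma CS_of_eps (a : nat -> C) (l : C) :
  (forall eps, 0 < eps -> exists N0, forall N, (N0 <= N)%nat ->
    Cmod (Cminus (sum_n a N) l) < eps) -> is_series a l.
Proof.
  intros H. unfold is_series. apply (proj2 (filterlim_locally (sum_n a) l)).
  intros eps. destruct (H eps (cond_pos eps)) as [N0 HN].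
  exists N0. intros N HN0. apply C_NormedModule_mixin_compat1. apply HN; auto.
Qed.

Lemma C_eq_of_small (x : C) : (forall eps, 0 < eps -> Cmod x < eps) -> x = 0%C.
Proof.
  intros H. apply Cmod_eq_0.
  destruct (Rle_lt_or_eq_dec 0 (Cmod x) (Cmod_ge_0 x)) as [h|h]; auto.
  specialize (H _ h). lra.
Qed.


Definition u (a : nat -> C) (N : nat) (k : nat) : C :=
  Cmult (a k) (RtoC (/ INR (S k) ^ N)).

Lemma exp_INR_mult (N : nat) (y : R) : exp (INR N * y) = exp y ^ N.
Proof.
  induction N as [|N IH].
  - simpl. rewrite Rmult_0_l. apply exp_0.
  - rewrite S_INR, Rmult_plus_distr_r, Rmult_1_l, exp_plus, IH. simpl. ring.
Qed.

Lemma npow_neg_nat (m N : nat) : (0 < m)%nat ->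
  npow_neg m (RtoC (INR N)) = RtoC (/ INR m ^ N).
Proof.
  intros Hm. unfold npow_neg. simpl.
  rewrite Rmult_0_l, cos_0, sin_0, Rmult_0_r, Rmult_1_r, Ropp_0.
  rewrite Ropp_mult_distr_l_reverse, exp_Ropp, exp_INR_mult, exp_ln.
  - reflexivity.
  - apply lt_0_INR; auto.
Qed.

Lemma dterm_nat (a : nat -> C) (N k : nat) :
  dterm a (RtoC (INR N)) k = u a N k.
Proof. unfold dterm, u. rewrite npow_neg_nat; auto. lia. Qed.

Lemma le_of_eps (x K : R) : (forall eps, 0 < eps -> x <= K + eps) -> x <= K.
Proof.
  intros H. destruct (Rle_or_lt x K) as [h|h]; auto.
  specialize (H ((x - K)/2)). lra.
Qed.

Lemma real_key (x y z : R) (d N : nat) : 1 <= z -> z < y -> y <= x -> (d + 2 <= N)%nat ->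
  x ^ d * z ^ N / x ^ N <= y ^ (d + 2) * (z / y) ^ N / (x * x).
Proof.
  intros Hz Hzy Hyx HN.
  destruct (Nat.le_exists_sub (d+2) N HN) as [e [He _]]. subst N.
  replace ((z / y) ^ (d + 2 + e)) with (z ^ (d+2+e) * / y ^ (d+2+e)) by (unfold Rdiv; rewrite Rpow_mult_distr, pow_inv; reflexivity).
  rewrite !pow_add.
  assert (0 < x) by lra. assert (0 < y) by lra.
  assert (0 < x ^ d) by (apply pow_lt; lra).
  assert (0 < y ^ d) by (apply pow_lt; lra).
  assert (0 < x ^ e) by (apply pow_lt; lra).
  assert (0 < y ^ e) by (apply pow_lt; lra).
  assert (0 <= z ^ e) by (apply pow_le; lra).
  assert (0 <= z ^ d) by (apply pow_le; lra).
  assert (Hye : y ^ e <= x ^ e) by (apply pow_incr; lra).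
  simpl. unfold Rdiv. 
  assert (E1 : x ^ d * (z ^ e * (z ^ d * (z * (z * 1)))) *
    / (x ^ e * (x ^ d * (x * (x * 1)))) = (z ^ e * (z ^ d * (z * z))) / (x ^ e) / (x * x))
    by (field; lra).
  rewrite E1.
  match goal with |- _ <= ?R => replace R with (z ^ e * (z ^ d * (z * z)) / y ^ e / (x * x)) end.
  2:{ rewrite !Rpow_mult_distr, !pow_inv. field. split; try lra. }
  unfold Rdiv. apply Rmult_le_compat_r.
  { left. apply Rinv_0_lt_compat. nra. }
  apply Rmult_le_compat_l.
  { assert (0 <= z ^ e * z ^ d) by (apply Rmult_le_pos; auto). nra. }
  apply Rinv_le_contravar; auto.
Qed.

Lemma Cmod_RtoC_mult (r : R) (x : C) : 0 <= r -> Cmod (Cmult (RtoC r) x) = r * Cmod x.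
Proof. intros. rewrite Cmod_mult, Cmod_R, Rabs_pos_eq; auto. Qed.

Lemma INR_S_pos (k : nat) : 0 < INR (S k).
Proof. apply lt_0_INR; lia. Qed.

Lemma term_bound (a : nat -> C) (M : R) (d j N n : nat) :
  (forall k, Cmod (a k) <= M * INR (S k)^d) ->
  (d + 2 <= N)%nat -> (j <= n)%nat ->
  Cmod (Cmult (RtoC (INR (S j)^N)) (u a N (S n))) <=
  2 * M * INR (S (S j))^(d+2) * (INR (S j) / INR (S (S j)))^N *
    (/ INR (S (S n)) - / INR (S (S (S n)))).
Proof.
  intros Hb HN Hjn.
  set (x := INR (S (S n))). set (y := INR (S (S j))). set (z := INR (S j)).
  assert (Hz : 1 <= z) by (unfold z; rewrite S_INR; pose proof (pos_INR j); lra).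
  assert (Hzy : z < y) by (unfold z, y; rewrite (S_INR (S j)); lra).
  assert (Hyx : y <= x) by (unfold x, y; apply le_INR; lia).
  assert (HM : 0 <= M).
  { specialize (Hb 0%nat). pose proof (Cmod_ge_0 (a 0%nat)).
    assert (0 < INR 1 ^ d) by (apply pow_lt; simpl; lra). nra. }
  unfold u. rewrite Cmod_mult, Cmod_mult, !Cmod_R.
  fold x. rewrite (Rabs_pos_eq (z ^ N)) by (apply pow_le; lra).
  assert (0 < x) by lra.
  rewrite Rabs_pos_eq by (left; apply Rinv_0_lt_compat, pow_lt; lra).
  specialize (Hb (S n)). fold x in Hb.
  pose proof (real_key x y z d N Hz Hzy Hyx HN) as K.
  assert (E : / x - / INR (S (S (S n))) = / (x * (x + 1))).
  { unfold x in *. rewrite (S_INR (S (S n))). field. split; lra. }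
  rewrite E.
  assert (HxN : 0 < x ^ N) by (apply pow_lt; lra).
  assert (0 <= z ^ N) by (apply pow_le; lra).
  assert (0 <= Cmod (a (S n))) by apply Cmod_ge_0.
  apply Rle_trans with (z ^ N * (M * x ^ d * / x ^ N)).
  { apply Rmult_le_compat_l; auto. apply Rmult_le_compat_r; auto.
    left; apply Rinv_0_lt_compat; auto. }
  assert (0 < y) by lra.
  set (Q := y ^ (d + 2) * (z / y) ^ N).
  assert (HQ : 0 <= Q) by (unfold Q; apply Rmult_le_pos; apply pow_le; try lra;
     unfold Rdiv; apply Rmult_le_pos; try lra; left; apply Rinv_0_lt_compat; lra).
  assert (Hx2 : / (x * x) <= 2 * / (x * (x + 1))).
  { assert (2 * / (x * (x + 1)) - / (x * x) = (x - 1) / (x * x * (x + 1))).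
    { assert (x <> 0) by lra. assert (x + 1 <> 0) by lra. field; auto. }
    assert (0 <= (x - 1) / (x * x * (x + 1))).
    { unfold Rdiv. apply Rmult_le_pos. lra. left; apply Rinv_0_lt_compat.
      apply Rmult_lt_0_compat; nra. }
    lra. }
  assert (HK : x ^ d * z ^ N / x ^ N <= Q / (x * x)) by exact K.
  replace (z ^ N * (M * x ^ d * / x ^ N)) with (M * (x ^ d * z ^ N / x ^ N)) by (unfold Rdiv; ring).
  replace (2 * M * y ^ (d + 2) * (z / y) ^ N * / (x * (x + 1))) with (M * (Q * (2 * / (x * (x + 1))))) by (unfold Q; ring).
  apply Rmult_le_compat_l; auto.
  apply Rle_trans with (1 := HK). unfold Rdiv. apply Rmult_le_compat_l; auto.
Qed.

Lemma sum_n_C_S (a : nat -> C) (n : nat) : sum_n a (S n) = Cplus (sum_n a n) (a (S n)).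
Proof. rewrite sum_Sn. reflexivity. Qed.

Lemma tail (a : nat -> C) (M : R) (d j N : nat) (A : C) :
  (forall k, Cmod (a k) <= M * INR (S k)^d) ->
  (forall k, (k < j)%nat -> a k = 0%C) ->
  (d + 2 <= N)%nat ->
  is_series (u a N) A ->
  Cmod (Cminus (Cmult (RtoC (INR (S j)^N)) A) (a j)) <=
  2 * M * INR (S (S j))^(d+2) * (INR (S j) / INR (S (S j)))^N.
Proof.
  intros Hb Hz HN HA.
  set (K := 2 * M * INR (S (S j))^(d+2) * (INR (S j) / INR (S (S j)))^N).
  assert (HM : 0 <= M).
  { specialize (Hb 0%nat). pose proof (Cmod_ge_0 (a 0%nat)).
    assert (0 < INR 1 ^ d) by (apply pow_lt; simpl; lra). nra. }
  assert (HK : 0 <= K).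
  { unfold K. pose proof (INR_S_pos j). pose proof (INR_S_pos (S j)).
    apply Rmult_le_pos. apply Rmult_le_pos. lra. apply pow_le; lra.
    apply pow_le. unfold Rdiv. apply Rmult_le_pos; try lra. left; apply Rinv_0_lt_compat; lra. }
  set (zN := INR (S j) ^ N).
  assert (HzN : 0 < zN) by (apply pow_lt, INR_S_pos).
  assert (Hpart : forall n, ((n < j)%nat -> (sum_n (u a N) n : C) = 0%C) /\
     ((j <= n)%nat -> Cmod (Cminus (Cmult (RtoC zN) (sum_n (u a N) n)) (a j))
        <= K * (1 - / INR (S (S n))))).
  { assert (Hj : forall n, (n = j)%nat -> (forall m, (m < n)%nat -> (sum_n (u a N) m : C) = 0%C) ->
       Cmod (Cminus (Cmult (RtoC zN) (sum_n (u a N) n)) (a j)) <= K * (1 - / INR (S (S n)))).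
    { intros n Hn Hprev.
      assert (Cminus (Cmult (RtoC zN) (sum_n (u a N) n)) (a j) = 0%C) as ->.
      { subst n. destruct j as [|j'].
        - rewrite sum_O. unfold u, zN. 
          replace (INR 1) with 1 by reflexivity. rewrite pow1, Rinv_1.
          rewrite Cmult_1_r. rewrite Cmult_1_l. ring.
        - rewrite sum_n_C_S, Hprev by lia. unfold u, zN.
          set (q := INR (S (S j')) ^ N).
          replace (Cminus (Cmult (RtoC q) (Cplus 0%C (Cmult (a (S j')) (RtoC (/ q))))) (a (S j')))
            with (Cminus (Cmult (a (S j')) (Cmult (RtoC q) (RtoC (/ q)))) (a (S j'))) by ring.
          rewrite <- RtoC_mult.
          rewrite Rinv_r by (apply pow_nonzero; pose proof (INR_S_pos (S j')); lra).
          ring. }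
      rewrite Cmod_0. apply Rmult_le_pos; auto.
      pose proof (INR_S_pos (S n)).
      assert (1 <= INR (S (S n))) by (rewrite S_INR; pose proof (pos_INR (S n)); lra).
      assert (/ INR (S (S n)) <= 1).
      { rewrite <- Rinv_1. apply Rinv_le_contravar; lra. }
      lra. }
    induction n as [|n IH].
    - split.
      + intros H0. rewrite sum_O. unfold u. rewrite Hz by auto. ring.
      + intros H0. apply Hj. lia. intros m Hm. lia.
    - destruct IH as [IH1 IH2]. split.
      + intros H1. rewrite sum_n_C_S, IH1 by lia. unfold u. rewrite Hz by lia. ring.
      + intros H1. destruct (Nat.eq_dec (S n) j) as [e|ne].
        * apply Hj; auto. intros m Hm.
          clear -IH1 Hm e Hz. induction m as [|m IHm].
          { rewrite sum_O. unfold u. rewrite Hz by lia. ring. }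
          { rewrite sum_n_C_S, IHm by lia. unfold u. rewrite Hz by lia. ring. }
        * assert (Hjn : (j <= n)%nat) by lia.
          specialize (IH2 Hjn).
          pose proof (term_bound a M d j N n Hb HN Hjn) as TB. fold zN in TB. fold K in TB.
          rewrite sum_n_C_S.
          replace (Cminus (Cmult (RtoC zN) (Cplus (sum_n (u a N) n) (u a N (S n)))) (a j))
            with (Cplus (Cminus (Cmult (RtoC zN) (sum_n (u a N) n)) (a j))
                        (Cmult (RtoC zN) (u a N (S n)))) by ring.
          eapply Rle_trans. apply Cmod_triangle.
          replace (K * (1 - / INR (S (S (S n))))) with
             (K * (1 - / INR (S (S n))) + K * (/ INR (S (S n)) - / INR (S (S (S n))))) by ring.
          apply Rplus_le_compat; auto. }
  apply le_of_eps. intros eps Heps.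
  assert (Hep : 0 < eps / zN) by (apply Rdiv_lt_0_compat; auto).
  destruct (CS_eps _ _ HA _ Hep) as [N0 HN0].
  set (n := (N0 + j)%nat).
  specialize (HN0 n ltac:(unfold n; lia)).
  destruct (Hpart n) as [_ Hn]. specialize (Hn ltac:(unfold n; lia)).
  replace (Cminus (Cmult (RtoC zN) A) (a j)) with
    (Cplus (Cminus (Cmult (RtoC zN) (sum_n (u a N) n)) (a j))
           (Cmult (RtoC zN) (Cminus A (sum_n (u a N) n)))) by ring.
  eapply Rle_trans. apply Cmod_triangle.
  rewrite Cmod_RtoC_mult by lra.
  assert (Cmod (Cminus A (sum_n (u a N) n)) < eps / zN).
  { replace (Cminus A (sum_n (u a N) n)) with (Copp (Cminus (sum_n (u a N) n) A)) by ring.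
    rewrite Cmod_opp. auto. }
  assert (zN * Cmod (Cminus A (sum_n (u a N) n)) <= eps).
  { replace eps with (zN * (eps / zN)) by (field; lra). 
    apply Rmult_le_compat_l; lra. }
  assert (K * (1 - / INR (S (S n))) <= K).
  { assert (0 <= / INR (S (S n))) by (left; apply Rinv_0_lt_compat, INR_S_pos). nra. }
  lra.
Qed.


Lemma two_geom (x A1 A2 r1 r2 : R) (N0 : nat) :
  0 <= A1 -> 0 <= A2 -> 0 <= r1 < 1 -> 0 <= r2 < 1 ->
  (forall N, (N0 <= N)%nat -> x <= A1 * r1 ^ N + A2 * r2 ^ N) -> x <= 0.
Proof.
  intros HA1 HA2 Hr1 Hr2 H.
  apply le_of_eps. intros eps Heps. rewrite Rplus_0_l.
  assert (Rabs r1 < 1) by (rewrite Rabs_pos_eq; lra).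
  assert (Rabs r2 < 1) by (rewrite Rabs_pos_eq; lra).
  assert (e1 : 0 < eps / (2 * (A1 + 1))) by (apply Rdiv_lt_0_compat; lra).
  assert (e2 : 0 < eps / (2 * (A2 + 1))) by (apply Rdiv_lt_0_compat; lra).
  destruct (pow_lt_1_zero r1 H0 _ e1) as [N1 HN1].
  destruct (pow_lt_1_zero r2 H1 _ e2) as [N2 HN2].
  set (N := (N0 + N1 + N2)%nat).
  specialize (H N ltac:(unfold N; lia)).
  specialize (HN1 N ltac:(unfold N; lia)). specialize (HN2 N ltac:(unfold N; lia)).
  rewrite Rabs_pos_eq in HN1 by (apply pow_le; lra).
  rewrite Rabs_pos_eq in HN2 by (apply pow_le; lra).
  assert (0 <= r1 ^ N) by (apply pow_le; lra).
  assert (0 <= r2 ^ N) by (apply pow_le; lra).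
  assert (A1 * r1 ^ N <= eps / 2).
  { apply Rle_trans with ((A1 + 1) * (eps / (2 * (A1 + 1)))).
    - apply Rle_trans with ((A1 + 1) * r1 ^ N). nra. apply Rmult_le_compat_l; lra.
    - right. field. lra. }
  assert (A2 * r2 ^ N <= eps / 2).
  { apply Rle_trans with ((A2 + 1) * (eps / (2 * (A2 + 1)))).
    - apply Rle_trans with ((A2 + 1) * r2 ^ N). nra. apply Rmult_le_compat_l; lra.
    - right. field. lra. }
  lra.
Qed.

Lemma ratio_lt1 (p q : nat) : (0 < p)%nat -> (p < q)%nat -> 0 <= INR p / INR q < 1.
Proof.
  intros Hp Hpq. assert (0 < INR p) by (apply lt_0_INR; auto).
  assert (INR p < INR q) by (apply lt_INR; auto).
  split. unfold Rdiv. apply Rmult_le_pos; try lra. left; apply Rinv_0_lt_compat; lra.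
  apply (Rmult_lt_reg_r (INR q)). lra. unfold Rdiv. rewrite Rmult_assoc, Rinv_l; lra.
Qed.

Lemma bound_M_nonneg (a : nat -> C) (M : R) (d : nat) :
  (forall k, Cmod (a k) <= M * INR (S k)^d) -> 0 <= M.
Proof.
  intros Hb. specialize (Hb 0%nat). pose proof (Cmod_ge_0 (a 0%nat)).
  assert (0 < INR 1 ^ d) by (apply pow_lt; simpl; lra). nra.
Qed.

Lemma wid_step (a : nat -> C) (M : R) (d m : nat) (C0 : R) (N1 : nat) (k : nat) :
  (forall k, Cmod (a k) <= M * INR (S k)^d) ->
  (forall N, (N1 <= N)%nat -> exists A, is_series (u a N) A /\
     Cmod (Cmult (RtoC (INR m ^ N)) A) <= C0) ->
  (forall i, (i < k)%nat -> a i = 0%C) -> (S k < m)%nat -> a k = 0%C.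
Proof.
  intros Hb HAC Hz Hkm.
  assert (HM := bound_M_nonneg a M d Hb).
  apply Cmod_eq_0. apply Rle_antisym; [|apply Cmod_ge_0].
  apply (two_geom _ (2 * M * INR (S (S k))^(d+2)) (Rabs C0)
           (INR (S k) / INR (S (S k))) (INR (S k) / INR m) (N1 + (d + 2))).
  - apply Rmult_le_pos. lra. apply pow_le. pose proof (INR_S_pos (S k)). lra.
  - apply Rabs_pos.
  - apply ratio_lt1; lia.
  - apply ratio_lt1; lia.
  - intros N HN.
    destruct (HAC N ltac:(lia)) as [A [HA HC]].
    pose proof (tail a M d k N A Hb Hz ltac:(lia) HA) as T.
    set (q := INR (S k) / INR m).
    assert (Hm : 0 < INR m) by (apply lt_0_INR; lia).
    assert (E : INR (S k) ^ N = q ^ N * INR m ^ N).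
    { unfold q. rewrite <- Rpow_mult_distr. f_equal. field. lra. }
    replace (a k) with (Cminus (Cmult (RtoC (INR (S k) ^ N)) A)
                        (Cminus (Cmult (RtoC (INR (S k) ^ N)) A) (a k))) by ring.
    eapply Rle_trans. 
    { unfold Cminus. eapply Rle_trans. apply Cmod_triangle. rewrite Cmod_opp. apply Rle_refl. }
    rewrite Rplus_comm. apply Rplus_le_compat; auto.
    rewrite E, RtoC_mult, <- Cmult_assoc, Cmod_RtoC_mult.
    2:{ apply pow_le. unfold q. apply ratio_lt1; lia. }
    rewrite Rmult_comm. apply Rmult_le_compat_r.
    { apply pow_le. unfold q. apply ratio_lt1; lia. }
    eapply Rle_trans. apply HC. apply Rle_abs.
Qed.

Lemma wid (a : nat -> C) (M : R) (d m : nat) (C0 : R) (N1 : nat) :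
  (forall k, Cmod (a k) <= M * INR (S k)^d) ->
  (forall N, (N1 <= N)%nat -> exists A, is_series (u a N) A /\
     Cmod (Cmult (RtoC (INR m ^ N)) A) <= C0) ->
  forall k, (S k < m)%nat -> a k = 0%C.
Proof.
  intros Hb HAC.
  assert (main : forall k i, (i <= k)%nat -> (S i < m)%nat -> a i = 0%C).
  { induction k as [|k IH]; intros i Hik Him.
    - apply (wid_step a M d m C0 N1 i Hb HAC); auto. intros; lia.
    - apply (wid_step a M d m C0 N1 i Hb HAC); auto. intros i' Hi'.
      apply IH; lia. }
  intros k Hk. apply (main k k); auto.
Qed.


Lemma is_series_evconst {K : AbsRing} {V : NormedModule K} (a : nat -> V) (c : V) (N0 : nat) :
  (forall N, (N0 <= N)%nat -> sum_n a N = c) -> is_series a c.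
Proof.
  intros H. unfold is_series.
  apply filterlim_ext_loc with (fun _ => c).
  - exists N0. intros N HN. symmetry. apply H. auto.
  - apply filterlim_const.
Qed.

Lemma sum_n_ind {G : AbelianMonoid} (n : nat) (x : G) (N : nat) :
  sum_n (fun k => if Nat.eqb k n then x else zero) N = if Nat.leb n N then x else zero.
Proof.
  induction N as [|N IH].
  - rewrite sum_O. destruct n; simpl; auto.
  - rewrite sum_Sn, IH.
    destruct (Nat.eqb (S N) n) eqn:E1.
    + apply Nat.eqb_eq in E1. subst n.
      rewrite (proj2 (Nat.leb_gt (S N) N)) by lia. rewrite Nat.leb_refl.
      apply plus_zero_l.
    + destruct (Nat.leb n N) eqn:E2; destruct (Nat.leb n (S N)) eqn:E3.
      * apply plus_zero_r.
      * apply Nat.leb_le in E2. apply Nat.leb_gt in E3. lia.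
      * apply Nat.leb_gt in E2. apply Nat.leb_le in E3. apply Nat.eqb_neq in E1. lia.
      * apply plus_zero_r.
Qed.

Lemma is_series_ind {K : AbsRing} {V : NormedModule K} (n : nat) (x : V) :
  is_series (fun k => if Nat.eqb k n then x else zero) x.
Proof.
  apply is_series_evconst with n. intros N HN. rewrite sum_n_ind.
  rewrite (proj2 (Nat.leb_le n N)) by auto. auto.
Qed.

Lemma is_series_ind_gen {K : AbsRing} {V : NormedModule K} (a : nat -> V) (n : nat) :
  (forall k, k <> n -> a k = zero) -> is_series a (a n).
Proof.
  intros H. apply is_series_ext with (fun k => if Nat.eqb k n then a n else zero).
  - intros k. destruct (Nat.eqb k n) eqn:E.
    + apply Nat.eqb_eq in E. subst; auto.
    + apply Nat.eqb_neq in E. symmetry; auto.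
  - apply is_series_ind.
Qed.

Lemma C_series_unique (a : nat -> C) (l1 l2 : C) : is_series a l1 -> is_series a l2 -> l1 = l2.
Proof.
  intros H1 H2. 
  assert (Cminus l1 l2 = 0%C) as E.
  { apply C_eq_of_small. intros eps Heps.
    assert (He2 : 0 < eps / 2) by lra.
    destruct (CS_eps _ _ H1 _ He2) as [N1 HN1]. destruct (CS_eps _ _ H2 _ He2) as [N2 HN2].
    specialize (HN1 (N1 + N2)%nat ltac:(lia)). specialize (HN2 (N1 + N2)%nat ltac:(lia)).
    set (S := sum_n a (N1 + N2)) in *.
    replace (Cminus l1 l2) with (Cplus (Cminus S l2) (Copp (Cminus S l1))) by ring.
    eapply Rle_lt_trans. apply Cmod_triangle. rewrite Cmod_opp. lra. }
  replace l1 with (Cplus (Cminus l1 l2) l2) by ring. rewrite E. ring.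
Qed.

Lemma R_series_ind_unique (a : nat -> R) (n : nat) :
  (forall k, k <> n -> a k = 0) -> Series a = a n.
Proof.
  intros H. apply is_series_unique. apply is_series_ind_gen. auto.
Qed.

Definition e (n : nat) : nat -> C := fun k => if Nat.eqb k n then RtoC 1 else RtoC 0.

Lemma H2inner_e_r (g : nat -> C) (m : nat) : H2inner g (e m) = g m.
Proof.
  unfold H2inner.
  rewrite (R_series_ind_unique _ m), (R_series_ind_unique (fun k => Im _) m).
  - unfold e. rewrite Nat.eqb_refl. destruct (g m) as [x y].
    unfold Cmult, Cconj; simpl. f_equal; ring.
  - intros k Hk. unfold e. rewrite (proj2 (Nat.eqb_neq k m) Hk).
    destruct (g k). unfold Cmult, Cconj; simpl. ring.
  - intros k Hk. unfold e. rewrite (proj2 (Nat.eqb_neq k m) Hk).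
    destruct (g k). unfold Cmult, Cconj; simpl. ring.
Qed.

Lemma H2inner_e_l (h : nat -> C) (n : nat) : H2inner (e n) h = Cconj (h n).
Proof.
  unfold H2inner.
  rewrite (R_series_ind_unique _ n), (R_series_ind_unique (fun k => Im _) n).
  - unfold e. rewrite Nat.eqb_refl. destruct (h n) as [x y].
    unfold Cmult, Cconj; simpl. f_equal; ring.
  - intros k Hk. unfold e. rewrite (proj2 (Nat.eqb_neq k n) Hk).
    destruct (h k). unfold Cmult, Cconj; simpl. ring.
  - intros k Hk. unfold e. rewrite (proj2 (Nat.eqb_neq k n) Hk).
    destruct (h k). unfold Cmult, Cconj; simpl. ring.
Qed.

Lemma e_H2 (n : nat) : in_H2 (e n).
Proof.
  exists 1. apply is_series_ext with (fun k => if Nat.eqb k n then 1 else zero).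
  - intros k. unfold e. destruct (Nat.eqb k n).
    + rewrite Cmod_1. simpl. ring.
    + rewrite Cmod_0. simpl. unfold zero; simpl. ring.
  - apply (@is_series_ind R_AbsRing R_NormedModule).
Qed.

Lemma finite_bound (f : nat -> R) (K : nat) (B : R) :
  (forall k, (K <= k)%nat -> f k <= B) -> exists B', forall k, f k <= B'.
Proof.
  revert B. induction K as [|K IH]; intros B H.
  - exists B. intros k. apply H. lia.
  - apply (IH (Rmax B (f K))). intros k Hk.
    destruct (Nat.eq_dec k K) as [->|ne].
    + apply Rmax_r.
    + eapply Rle_trans. apply H. lia. apply Rmax_l.
Qed.

Lemma H2_bound (g : nat -> C) : in_H2 g -> exists M, forall k, Cmod (g k) <= M * INR (S k) ^ 0.
Proof.
  intros [S HS]. exists (1 + S). intros k. simpl. rewrite Rmult_1_r.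
  assert (Hk : (Cmod (g k))^2 <= S).
  { rewrite <- (is_series_unique _ _ HS).
    replace (Cmod (g k) ^ 2) with (Series (fun i => if Nat.eqb i k then Cmod (g k) ^ 2 else 0)).
    - apply Series_le.
      + intros n. destruct (Nat.eqb n k) eqn:E.
        * apply Nat.eqb_eq in E. subst. split. apply pow2_ge_0. lra.
        * split. lra. apply pow2_ge_0.
      + exists S; auto.
    - rewrite (R_series_ind_unique _ k). rewrite Nat.eqb_refl. auto.
      intros i Hi. rewrite (proj2 (Nat.eqb_neq i k) Hi). auto. }
  pose proof (Cmod_ge_0 (g k)).
  destruct (Rle_or_lt (Cmod (g k)) 1); nra.
Qed.

Lemma series_bound (a : nat -> C) (N : nat) (p : C) :
  is_series (u a N) p -> exists M, forall k, Cmod (a k) <= M * INR (S k) ^ N.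
Proof.
  intros H.
  destruct (CS_eps _ _ H 1 ltac:(lra)) as [N0 HN0].
  destruct (finite_bound (fun k => Cmod (u a N k)) (S N0) 2) as [B HB].
  { intros k Hk. destruct k as [|k]. lia.
    replace (u a N (S k)) with (Cminus (Cminus (sum_n (u a N) (S k)) p) (Cminus (sum_n (u a N) k) p))
      by (rewrite sum_n_C_S; ring).
    unfold Cminus at 1. eapply Rle_trans. apply Cmod_triangle. rewrite Cmod_opp.
    pose proof (HN0 (S k) ltac:(lia)). pose proof (HN0 k ltac:(lia)). simpl in *. lra. }
  exists B. intros k. specialize (HB k). simpl in HB. unfold u in HB.
  rewrite Cmod_mult, Cmod_R in HB.
  assert (0 < INR (S k) ^ N) by (apply pow_lt, INR_S_pos).
  rewrite Rabs_pos_eq in HB by (left; apply Rinv_0_lt_compat; auto).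
  apply (Rmult_le_reg_r (/ INR (S k) ^ N)). apply Rinv_0_lt_compat; auto.
  rewrite Rmult_assoc, Rinv_r by lra. lra.
Qed.


Lemma npow_factor (c0 m N : nat) (p : C) : (0 < m)%nat ->
  npow_neg m (Cplus (Cmult (RtoC (INR c0)) (RtoC (INR N))) p) =
  Cmult (RtoC (/ INR m ^ (c0 * N))) (npow_neg m p).
Proof.
  intros Hm. destruct p as [x y]. unfold npow_neg, Cplus, Cmult, RtoC. simpl.
  assert (E : exp (- (INR c0 * INR N - 0 * 0 + x) * ln (INR m)) =
              / INR m ^ (c0 * N) * exp (- x * ln (INR m))).
  { replace (- (INR c0 * INR N - 0 * 0 + x) * ln (INR m)) with
       (- (INR (c0 * N) * ln (INR m)) + (- x * ln (INR m))) by (rewrite mult_INR; ring).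
    rewrite exp_plus, exp_Ropp, exp_INR_mult, exp_ln by (apply lt_0_INR; auto). reflexivity. }
  rewrite E.
  replace (INR c0 * 0 + 0 * INR N + y) with y by ring.
  f_equal; ring.
Qed.

Lemma Cmod_npow (m : nat) (p : C) : Cmod (npow_neg m p) = exp (- Re p * ln (INR m)).
Proof.
  unfold npow_neg, Cmod. simpl.
  set (E := exp (- Re p * ln (INR m))). set (t := Im p * ln (INR m)).
  replace (E * cos t * (E * cos t * 1) + - (E * sin t) * (- (E * sin t) * 1))
    with (Rsqr E * (Rsqr (sin t) + Rsqr (cos t))) by (unfold Rsqr; ring).
  rewrite sin2_cos2, Rmult_1_r, sqrt_Rsqr; auto.
  left. apply exp_pos.
Qed.

Lemma rel_unpack (c0 : nat) (b : nat -> C) (n : nat) (g : nat -> C) :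
  DPhi_rel c0 b (e n) g -> exists N1, forall N, (N1 <= N)%nat -> exists p,
    is_series (u b N) p /\
    is_series (u g N) (Cmult (RtoC (- ln (INR (S n))))
        (Cmult (RtoC (/ INR (S n) ^ (c0 * N))) (npow_neg (S n) p))).
Proof.
  intros [Hg [sigma0 Hs]].
  destruct (INR_unbounded sigma0) as [N1 HN1].
  exists N1. intros N HN.
  assert (Hre : sigma0 < Re (RtoC (INR N))).
  { simpl. apply le_INR in HN. lra. }
  destruct (Hs _ Hre) as [p [Hp [_ [v [Hv Hw]]]]].
  exists p. split.
  - eapply is_series_ext. 2: exact Hp. intros k. apply dterm_nat.
  - assert (Ev : v = Cmult (RtoC (- ln (INR (S n))))
                   (npow_neg (S n) (Cplus (Cmult (RtoC (INR c0)) (RtoC (INR N))) p))).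
    { eapply C_series_unique. exact Hw.
      assert (H := is_series_ind_gen
         (fun k => dterm (dderiv (e n)) (Cplus (Cmult (RtoC (INR c0)) (RtoC (INR N))) p) k) n).
      assert (Hv0 : dterm (dderiv (e n)) (Cplus (Cmult (RtoC (INR c0)) (RtoC (INR N))) p) n =
         Cmult (RtoC (- ln (INR (S n)))) (npow_neg (S n) (Cplus (Cmult (RtoC (INR c0)) (RtoC (INR N))) p))).
      { unfold dterm, dderiv, e. rewrite Nat.eqb_refl. ring. }
      cbv beta in H. rewrite Hv0 in H. apply H.
      intros k Hk. unfold dterm, dderiv, e. rewrite (proj2 (Nat.eqb_neq k n) Hk).
      change (@zero (NormedModule.AbelianMonoid C_AbsRing C_NormedModule)) with (RtoC 0).
      rewrite !Cmult_0_l. reflexivity. }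
    rewrite <- npow_factor by lia. rewrite <- Ev.
    eapply is_series_ext. 2: exact Hv. intros k. apply dterm_nat.
Qed.


Lemma exp_le (x y : R) : x <= y -> exp x <= exp y.
Proof. intros [h|h]. left; apply exp_increasing; auto. subst; lra. Qed.

Lemma b_close (b : nat -> C) (M : R) (d N : nat) (p : C) :
  (forall k, Cmod (b k) <= M * INR (S k)^d) -> (d + 2 <= N)%nat -> is_series (u b N) p ->
  Cmod (Cminus p (b 0%nat)) <= 2 * M * 2 ^ (d + 2) * (1/2) ^ N.
Proof.
  intros Hb HN Hp.
  assert (HM := bound_M_nonneg b M d Hb).
  pose proof (tail b M d 0 N p Hb ltac:(intros; lia) HN Hp) as T.
  replace (INR (S 0)) with 1 in T by reflexivity.
  replace (INR (S (S 0))) with 2 in T by (simpl; ring).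
  rewrite pow1, Cmult_1_l in T. auto.
Qed.

Lemma b_close' (b : nat -> C) (M : R) (d N : nat) (p : C) :
  (forall k, Cmod (b k) <= M * INR (S k)^d) -> (d + 2 <= N)%nat -> is_series (u b N) p ->
  Rabs (Re p - Re (b 0%nat)) <= 2 * M * 2 ^ (d + 2).
Proof.
  intros Hb HN Hp. pose proof (b_close b M d N p Hb HN Hp) as H.
  assert (HM := bound_M_nonneg b M d Hb).
  assert (Re p - Re (b 0%nat) = Re (Cminus p (b 0%nat))) as -> by (destruct p as [p1 p2]; destruct (b 0%nat) as [q1 q2]; simpl; ring).
  eapply Rle_trans. apply re_le_Cmod. eapply Rle_trans. apply H.
  assert (0 <= (1/2)^N <= 1).
  { split. apply pow_le; lra. apply Rle_trans with (1 ^ N). apply pow_incr. lra. rewrite pow1; lra. }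
  assert (0 <= 2 * M * 2 ^ (d + 2)) by (apply Rmult_le_pos; [lra| apply pow_le; lra]).
  nra.
Qed.

Lemma mod_value (n : nat) (p : C) :
  Cmod (Cmult (RtoC (- ln (INR (S n)))) (npow_neg (S n) p)) =
  ln (INR (S n)) * exp (- Re p * ln (INR (S n))).
Proof.
  rewrite Cmod_mult, Cmod_R, Cmod_npow, Rabs_Ropp, Rabs_pos_eq; auto.
  rewrite <- ln_1. destruct n. simpl. right; auto.
  left. apply ln_increasing. lra. rewrite S_INR. pose proof (INR_S_pos n). lra.
Qed.

Lemma scaled_value (c0 : nat) (b : nat -> C) (n : nat) (g : nat -> C) :
  DPhi_rel c0 b (e n) g -> exists N1, forall N, (N1 <= N)%nat -> exists p A,
    is_series (u b N) p /\ is_series (u g N) A /\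
    Cmult (RtoC (INR ((S n)^c0) ^ N)) A = Cmult (RtoC (- ln (INR (S n)))) (npow_neg (S n) p).
Proof.
  intros H. destruct (rel_unpack c0 b n g H) as [N1 HN1].
  exists N1. intros N HN. destruct (HN1 N HN) as [p [Hp Hg]].
  exists p. eexists. split; [exact Hp|]. split; [exact Hg|].
  rewrite pow_INR, <- pow_mult.
  set (q := INR (S n) ^ (c0 * N)).
  assert (q <> 0) by (apply pow_nonzero; pose proof (INR_S_pos n); lra).
  replace (Cmult (RtoC q) (Cmult (RtoC (- ln (INR (S n)))) (Cmult (RtoC (/ q)) (npow_neg (S n) p))))
    with (Cmult (Cmult (RtoC q) (RtoC (/ q))) (Cmult (RtoC (- ln (INR (S n)))) (npow_neg (S n) p))) by ring.
  rewrite <- RtoC_mult, Rinv_r by auto. ring.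
Qed.

Lemma G_bounds (c0 : nat) (b : nat -> C) (M : R) (d n : nat) (g : nat -> C) :
  (forall k, Cmod (b k) <= M * INR (S k)^d) -> DPhi_rel c0 b (e n) g ->
  exists N1, forall N, (N1 <= N)%nat -> exists A, is_series (u g N) A /\
    ln (INR (S n)) * exp (- (Re (b 0%nat) + 2 * M * 2 ^ (d + 2)) * ln (INR (S n)))
      <= Cmod (Cmult (RtoC (INR ((S n)^c0) ^ N)) A) <=
    ln (INR (S n)) * exp ((2 * M * 2 ^ (d + 2) - Re (b 0%nat)) * ln (INR (S n))).
Proof.
  intros Hb H. destruct (scaled_value c0 b n g H) as [N1 HN1].
  exists (N1 + (d + 2))%nat. intros N HN.
  destruct (HN1 N ltac:(lia)) as [p [A [Hp [HA E]]]].
  exists A. split; auto. rewrite E, mod_value.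
  pose proof (b_close' b M d N p Hb ltac:(lia) Hp) as Hc.
  apply Rabs_le_between in Hc.
  assert (HL : 0 <= ln (INR (S n))).
  { rewrite <- ln_1. destruct n. simpl. right; auto.
    left. apply ln_increasing. lra. rewrite S_INR. pose proof (INR_S_pos n). lra. }
  split; apply Rmult_le_compat_l; auto; apply exp_le; nra.
Qed.


Lemma L_sa (c0 : nat) (b : nat -> C) (n m : nat) (g h : nat -> C) :
  DPhi_selfadjoint c0 b -> DPhi_rel c0 b (e n) g -> DPhi_rel c0 b (e m) h ->
  g m = Cconj (h n).
Proof.
  intros SA Hg Hh. pose proof (SA (e n) (e m) g h (e_H2 n) (e_H2 m) Hg Hh) as E.
  rewrite H2inner_e_r, H2inner_e_l in E. auto.
Qed.

Lemma get_rel (c0 : nat) (b : nat -> C) : DPhi_bounded c0 b ->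
  forall n, exists g, DPhi_rel c0 b (e n) g.
Proof.
  intros [M0 H] n. destruct (H (e n) (e_H2 n)) as [g [Hg _]]. eauto.
Qed.

Lemma get_bbound (c0 : nat) (b : nat -> C) : DPhi_bounded c0 b ->
  exists M d, forall k, Cmod (b k) <= M * INR (S k)^d.
Proof.
  intros H. destruct (get_rel c0 b H 0) as [g Hg].
  destruct (rel_unpack c0 b 0 g Hg) as [N1 HN1].
  destruct (HN1 N1 (le_n _)) as [p [Hp _]].
  destruct (series_bound b N1 p Hp) as [M HM]. eauto.
Qed.

Lemma rel_H2 (c0 : nat) (b f g : nat -> C) : DPhi_rel c0 b f g -> in_H2 g.
Proof. intros [H _]; auto. Qed.

Lemma g_zero_below (c0 : nat) (b : nat -> C) (M : R) (d n : nat) (g : nat -> C) :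
  (forall k, Cmod (b k) <= M * INR (S k)^d) -> DPhi_rel c0 b (e n) g ->
  forall k, (S k < (S n)^c0)%nat -> g k = 0%C.
Proof.
  intros Hb Hg.
  destruct (H2_bound g (rel_H2 _ _ _ _ Hg)) as [Mg HMg].
  destruct (G_bounds c0 b M d n g Hb Hg) as [N1 HN1].
  apply (wid g Mg 0 ((S n)^c0)
     (ln (INR (S n)) * exp ((2 * M * 2 ^ (d + 2) - Re (b 0%nat)) * ln (INR (S n)))) N1 HMg).
  intros N HN. destruct (HN1 N HN) as [A [HA [_ HC]]]. eauto.
Qed.

Lemma g_e0_zero (c0 : nat) (b : nat -> C) (M : R) (d : nat) (g : nat -> C) :
  (forall k, Cmod (b k) <= M * INR (S k)^d) -> DPhi_rel c0 b (e 0) g ->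
  forall k, g k = 0%C.
Proof.
  intros Hb Hg k.
  destruct (H2_bound g (rel_H2 _ _ _ _ Hg)) as [Mg HMg].
  destruct (G_bounds c0 b M d 0 g Hb Hg) as [N1 HN1].
  apply (wid g Mg 0 (S (S k)) 0 N1 HMg); [|lia].
  intros N HN. destruct (HN1 N HN) as [A [HA [_ HC]]].
  exists A. split; auto.
  replace (INR 1) with 1 in HC by reflexivity. rewrite ln_1, Rmult_0_l in HC.
  rewrite Nat.pow_1_l in HC. replace (INR 1) with 1 in HC by reflexivity.
  rewrite pow1, Cmult_1_l in HC.
  rewrite Cmod_mult, (Rle_antisym _ _ HC (Cmod_ge_0 A)), Rmult_0_r. lra.
Qed.

Lemma g_at0 (c0 : nat) (b : nat -> C) (n : nat) (g : nat -> C) :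
  DPhi_selfadjoint c0 b -> DPhi_bounded c0 b -> DPhi_rel c0 b (e n) g -> g 0%nat = 0%C.
Proof.
  intros SA HB Hg.
  destruct (get_bbound c0 b HB) as [M [d Hb]].
  destruct (get_rel c0 b HB 0) as [h Hh].
  rewrite (L_sa c0 b n 0 g h SA Hg Hh).
  rewrite (g_e0_zero c0 b M d h Hb Hh n). unfold Cconj, RtoC. simpl. rewrite Ropp_0. reflexivity.
Qed.

Lemma contra_gen (g : nat -> C) (M : R) (d j N1 : nat) (cc : R) :
  (forall k, Cmod (g k) <= M * INR (S k)^d) ->
  (forall k, (k < j)%nat -> g k = 0%C) -> g j = 0%C -> 0 < cc ->
  (forall N, (N1 <= N)%nat -> exists A, is_series (u g N) A /\
     cc <= Cmod (Cmult (RtoC (INR (S j) ^ N)) A)) -> False.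
Proof.
  intros Hb Hz Hj Hc H.
  assert (HM := bound_M_nonneg g M d Hb).
  assert (cc <= 0).
  { apply (two_geom cc (2 * M * INR (S (S j))^(d+2)) 0
           (INR (S j) / INR (S (S j))) 0 (N1 + (d + 2))).
    - apply Rmult_le_pos. lra. apply pow_le. pose proof (INR_S_pos (S j)). lra.
    - lra.
    - apply ratio_lt1; lia.
    - lra.
    - intros N HN. destruct (H N ltac:(lia)) as [A [HA HA2]].
      pose proof (tail g M d j N A Hb Hz ltac:(lia) HA) as T.
      rewrite Hj in T. unfold Cminus in T. rewrite Copp_0, Cplus_0_r in T. lra. }
  lra.
Qed.

Lemma ln2_pos : 0 < ln (INR (S 1)).
Proof. rewrite <- ln_1. apply ln_increasing. lra. simpl. lra. Qed.

Lemma case_c0 (c0 : nat) (b : nat -> C) :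
  DPhi_selfadjoint c0 b -> DPhi_bounded c0 b -> (c0 = 0 \/ 2 <= c0)%nat -> False.
Proof.
  intros SA HB Hc0.
  destruct (get_bbound c0 b HB) as [M [d Hb]].
  destruct (get_rel c0 b HB 1) as [g1 Hg1].
  destruct (H2_bound g1 (rel_H2 _ _ _ _ Hg1)) as [Mg HMg].
  destruct (G_bounds c0 b M d 1 g1 Hb Hg1) as [N1 HN1].
  set (cc := ln (INR (S 1)) * exp (- (Re (b 0%nat) + 2 * M * 2 ^ (d + 2)) * ln (INR (S 1)))).
  assert (Hcc : 0 < cc) by (apply Rmult_lt_0_compat; [apply ln2_pos | apply exp_pos]).
  assert (Hpos : (1 <= 2 ^ c0)%nat) by (apply Nat.le_succ_l; apply Nat.neq_0_lt_0; apply Nat.pow_nonzero; lia).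
  set (j := (2 ^ c0 - 1)%nat).
  assert (Hj : S j = ((S 1) ^ c0)%nat) by (unfold j; simpl; lia).
  apply (contra_gen g1 Mg 0 j N1 cc HMg).
  - intros k Hk. apply (g_zero_below c0 b M d 1 g1 Hb Hg1). lia.
  - destruct Hc0 as [Hc0|Hc0].
    + subst c0. simpl in j. unfold j. simpl. apply (g_at0 0 b 1 g1 SA HB Hg1).
    + destruct (get_rel c0 b HB j) as [gj Hgj].
      rewrite (L_sa c0 b 1 j g1 gj SA Hg1 Hgj).
      rewrite (g_zero_below c0 b M d j gj Hb Hgj 1).
      * unfold Cconj, RtoC. simpl. rewrite Ropp_0. reflexivity.
      * rewrite Hj. 
        assert (H4 : (4 <= 2 ^ c0)%nat).
        { replace c0 with (2 + (c0 - 2))%nat by lia. rewrite Nat.pow_add_r.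
          assert (1 <= 2 ^ (c0 - 2))%nat by (apply Nat.le_succ_l, Nat.neq_0_lt_0, Nat.pow_nonzero; lia).
          simpl. lia. }
        assert (2 ^ c0 <= (2 ^ c0) ^ c0)%nat.
        { rewrite <- (Nat.pow_1_r (2 ^ c0)%nat) at 1. apply Nat.pow_le_mono_r; lia. }
        simpl in *. lia.
  - auto.
  - intros N HN. destruct (HN1 N HN) as [A [HA [HC _]]]. exists A. split; auto.
    rewrite Hj. auto.
Qed.


Lemma angle_eq (a a' : R) : cos a = cos a' -> sin a = sin a' -> Rabs (a - a') < 2 * PI -> a = a'.
Proof.
  intros Hc Hs Hab.
  assert (Hs0 : sin (a - a') = 0) by (rewrite sin_minus, Hc, Hs; ring).
  assert (Hc1 : cos (a - a') = 1).
  { rewrite cos_minus, Hc, Hs. pose proof (sin2_cos2 a'). unfold Rsqr in *. lra. }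
  destruct (sin_eq_0_0 _ Hs0) as [k Hk].
  assert (HPI : 0 < PI) by apply PI_RGT_0.
  assert (Hk2 : Rabs (IZR k) < 2).
  { rewrite Hk, Rabs_mult, (Rabs_pos_eq PI) in Hab by lra.
    apply (Rmult_lt_reg_r PI); lra. }
  apply Rabs_def2 in Hk2. destruct Hk2 as [Hk2a Hk2b].
  assert (Hk2a' : (-2 < k)%Z) by (apply lt_IZR; lra). assert (Hk2b' : (k < 2)%Z) by (apply lt_IZR; lra).
  assert (Hk3 : (k = 0 \/ k = 1 \/ k = -1)%Z) by lia. destruct Hk3 as [Hk3|[Hk3|Hk3]]; subst k.
  - rewrite Rmult_0_l in Hk. lra.
  - rewrite Hk, Rmult_1_l, cos_PI in Hc1. lra.
  - rewrite Hk in Hc1. replace (IZR (-1) * PI) with (- PI) in Hc1 by (simpl; ring).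
    rewrite cos_neg, cos_PI in Hc1. lra.
Qed.

Lemma exp_inj' (x y : R) : exp x = exp y -> x = y.
Proof.
  intros H. destruct (Rtotal_order x y) as [h|[h|h]]; auto.
  - apply exp_increasing in h. lra.
  - apply exp_increasing in h. lra.
Qed.

Lemma npow_inj_local (m : nat) (p p' : C) : (2 <= m)%nat ->
  npow_neg m p = npow_neg m p' -> Rabs (Im p - Im p') * ln (INR m) < 2 * PI -> p = p'.
Proof.
  intros Hm E Hlt.
  assert (HL : 0 < ln (INR m)).
  { rewrite <- ln_1. apply ln_increasing. lra. apply lt_1_INR. lia. }
  assert (Em := f_equal Cmod E). rewrite !Cmod_npow in Em.
  apply exp_inj' in Em.
  assert (Hre : Re p = Re p') by (apply (Rmult_eq_reg_r (ln (INR m))); lra).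
  unfold npow_neg in E. rewrite Hre in E.
  set (Ex := exp (- Re p' * ln (INR m))) in E.
  assert (HEx : 0 < Ex) by apply exp_pos.
  injection E as E1 E2.
  assert (Hcos : cos (Im p * ln (INR m)) = cos (Im p' * ln (INR m))).
  { apply (Rmult_eq_reg_l Ex); lra. }
  assert (Hsin : sin (Im p * ln (INR m)) = sin (Im p' * ln (INR m))).
  { apply (Rmult_eq_reg_l Ex); lra. }
  apply angle_eq in Hcos; auto.
  2:{ rewrite <- Rmult_minus_distr_r, Rabs_mult, (Rabs_pos_eq (ln _)); lra. }
  assert (Him : Im p = Im p') by (apply (Rmult_eq_reg_r (ln (INR m))); lra).
  destruct p as [x y], p' as [x' y']. simpl in *. subst. reflexivity.
Qed.

Lemma ln2_lt_1 : ln (INR (S 1)) < 1.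
Proof.
  assert (H : 2 < exp 1) by (pose proof (exp_ineq1 1 ltac:(lra)); lra).
  rewrite <- (ln_exp 1). apply ln_increasing. simpl; lra. simpl. lra.
Qed.

Lemma odd_3pow (n : nat) : Nat.odd (3 ^ n) = true.
Proof.
  induction n as [|n IH]. reflexivity.
  rewrite Nat.pow_succ_r', Nat.odd_mul, IH. reflexivity.
Qed.

Lemma even_2pow (n : nat) : (1 <= n)%nat -> Nat.even (2 ^ n) = true.
Proof.
  intros H. destruct n as [|n]. lia.
  rewrite Nat.pow_succ_r', Nat.even_mul. reflexivity.
Qed.

Lemma pow23_pos (k l : Z) : (0 < k)%Z -> IZR l * ln (INR 2) = IZR k * ln (INR 3) -> False.
Proof.
  intros Hk E.
  assert (H2 : 0 < ln (INR 2)) by (rewrite <- ln_1; apply ln_increasing; simpl; lra).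
  assert (H3 : 0 < ln (INR 3)) by (rewrite <- ln_1; apply ln_increasing; simpl; lra).
  assert (Hk' : 0 < IZR k) by (apply IZR_lt; auto).
  assert (Hl' : 0 < IZR l).
  { destruct (Rlt_or_le 0 (IZR l)) as [h|h]; auto. nra. }
  apply lt_IZR in Hl'.
  assert (Ek : k = Z.of_nat (Z.to_nat k)) by (rewrite Z2Nat.id; lia).
  assert (El : l = Z.of_nat (Z.to_nat l)) by (rewrite Z2Nat.id; lia).
  rewrite Ek, El in E. set (k' := Z.to_nat k) in *. set (l' := Z.to_nat l) in *.
  assert (1 <= l')%nat by lia.
  rewrite <- !INR_IZR_INZ in E.
  assert (Ep := f_equal exp E).
  rewrite !exp_INR_mult, !exp_ln in Ep by (simpl; lra).
  replace 2 with (INR 2) in Ep by (simpl; ring). replace 3 with (INR 3) in Ep by (simpl; ring).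
  rewrite <- !pow_INR in Ep. apply INR_eq in Ep.
  assert (Hev : Nat.even (2 ^ l') = true) by (apply even_2pow; lia).
  pose proof (odd_3pow k') as Hod. rewrite <- Ep in Hod.
  rewrite <- Nat.negb_even, Hev in Hod. discriminate.
Qed.

Lemma log23 (t : R) : sin (t * ln (INR 2)) = 0 -> sin (t * ln (INR 3)) = 0 -> t = 0.
Proof.
  intros S2 S3.
  destruct (Req_dec t 0) as [h|ht]; auto. exfalso.
  assert (H2 : 0 < ln (INR 2)) by (rewrite <- ln_1; apply ln_increasing; simpl; lra).
  assert (H3 : 0 < ln (INR 3)) by (rewrite <- ln_1; apply ln_increasing; simpl; lra).
  destruct (sin_eq_0_0 _ S2) as [k Hk]. destruct (sin_eq_0_0 _ S3) as [l Hl].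
  assert (HPI : 0 < PI) by apply PI_RGT_0.
  assert (E : t * (IZR l * ln (INR 2) - IZR k * ln (INR 3)) = 0).
  { replace (t * (IZR l * ln (INR 2) - IZR k * ln (INR 3))) with
      (IZR l * (t * ln (INR 2)) - IZR k * (t * ln (INR 3))) by ring.
    rewrite Hk, Hl. ring. }
  apply Rmult_integral in E. destruct E as [E|E]; [lra|].
  assert (E' : IZR l * ln (INR 2) = IZR k * ln (INR 3)) by lra.
  destruct (Z.lt_trichotomy k 0) as [hk|[hk|hk]].
  - apply (pow23_pos (- k) (- l)); [lia|]. rewrite !opp_IZR. lra.
  - subst k. rewrite Rmult_0_l in Hk. apply Rmult_integral in Hk. lra.
  - apply (pow23_pos k l); auto.
Qed.


Lemma diag1 (b : nat -> C) (n : nat) (g : nat -> C) :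
  DPhi_selfadjoint 1 b -> DPhi_bounded 1 b -> DPhi_rel 1 b (e n) g ->
  forall k, k <> n -> g k = 0%C.
Proof.
  intros SA HB Hg k Hk.
  destruct (get_bbound 1 b HB) as [M [d Hb]].
  assert (Hkn : (k < n \/ n < k)%nat) by lia. destruct Hkn as [h|h].
  - apply (g_zero_below 1 b M d n g Hb Hg). rewrite Nat.pow_1_r. lia.
  - destruct (get_rel 1 b HB k) as [gk Hgk].
    rewrite (L_sa 1 b n k g gk SA Hg Hgk).
    rewrite (g_zero_below 1 b M d k gk Hb Hgk n).
    + unfold Cconj, RtoC. simpl. rewrite Ropp_0. reflexivity.
    + rewrite Nat.pow_1_r. lia.
Qed.

Lemma c1_value (b : nat -> C) (n : nat) (g : nat -> C) :
  DPhi_selfadjoint 1 b -> DPhi_bounded 1 b -> DPhi_rel 1 b (e n) g ->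
  exists N1, forall N, (N1 <= N)%nat -> exists p, is_series (u b N) p /\
    g n = Cmult (RtoC (- ln (INR (S n)))) (npow_neg (S n) p).
Proof.
  intros SA HB Hg.
  destruct (scaled_value 1 b n g Hg) as [N1 HN1].
  exists N1. intros N HN. destruct (HN1 N HN) as [p [A [Hp [HA E]]]].
  exists p. split; auto. rewrite <- E.
  assert (HA' : is_series (u g N) (u g N n)).
  { apply is_series_ind_gen. intros k Hk. unfold u.
    rewrite (diag1 b n g SA HB Hg k Hk). rewrite Cmult_0_l. reflexivity. }
  rewrite (C_series_unique _ _ _ HA HA').
  rewrite Nat.pow_1_r. unfold u.
  set (q := INR (S n) ^ N).
  assert (q <> 0) by (apply pow_nonzero; pose proof (INR_S_pos n); lra).
  replace (Cmult (RtoC q) (Cmult (g n) (RtoC (/ q)))) with (Cmult (g n) (Cmult (RtoC q) (RtoC (/ q)))) by ring.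
  rewrite <- RtoC_mult, Rinv_r by auto. ring.
Qed.

Lemma gamma_real (b : nat -> C) (n : nat) (g : nat -> C) :
  DPhi_selfadjoint 1 b -> DPhi_rel 1 b (e n) g -> Im (g n) = 0.
Proof.
  intros SA Hg. pose proof (L_sa 1 b n n g g SA Hg Hg) as E.
  destruct (g n) as [x y]. unfold Cconj in E. simpl in *. injection E as E. lra.
Qed.

Lemma im_zero_sin (n : nat) (q : C) :
  Im (Cmult (RtoC (- ln (INR (S n)))) (npow_neg (S n) q)) = 0 -> (1 <= n)%nat ->
  sin (Im q * ln (INR (S n))) = 0.
Proof.
  intros H Hn.
  assert (HL : 0 < ln (INR (S n))).
  { rewrite <- ln_1. apply ln_increasing. lra. apply lt_1_INR. lia. }
  unfold npow_neg, Cmult, RtoC, Im in H. cbn [fst snd] in H.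
  set (E := exp (- Re q * ln (INR (S n)))) in H.
  assert (0 < E) by apply exp_pos.
  change (snd q) with (Im q) in H. set (s := sin (Im q * ln (INR (S n)))) in *.
  assert (E * s * ln (INR (S n)) = 0) by lra.
  apply Rmult_integral in H1. destruct H1 as [H1|H1]; [|lra].
  apply Rmult_integral in H1. destruct H1; [lra|auto].
Qed.

Lemma im_le_Cmod' (z : C) : Rabs (Im z) <= Cmod z.
Proof. eapply Rle_trans. 2: apply Rmax_Cmod. apply Rmax_r. Qed.

Lemma case_c1 (b : nat -> C) :
  DPhi_selfadjoint 1 b -> DPhi_bounded 1 b ->
  Im (b 0%nat) = 0 /\ forall k, (1 <= k)%nat -> b k = 0%C.
Proof.
  intros SA HB.
  destruct (get_bbound 1 b HB) as [M [d Hb]].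
  assert (HM := bound_M_nonneg b M d Hb).
  set (K := 2 * M * 2 ^ (d + 2)).
  assert (HK : 0 <= K) by (unfold K; apply Rmult_le_pos; [lra|apply pow_le; lra]).
  destruct (get_rel 1 b HB 1) as [g1 Hg1].
  destruct (c1_value b 1 g1 SA HB Hg1) as [N1 HN1].
  assert (Hh : Rabs (1/2) < 1) by (rewrite Rabs_pos_eq; lra).
  destruct (pow_lt_1_zero (1/2) Hh (1 / (2 * (K + 1))) ltac:(apply Rdiv_lt_0_compat; lra)) as [N2 HN2].
  set (N0 := (N1 + (d + 2) + N2)%nat).
  assert (close : forall N p, (N0 <= N)%nat -> is_series (u b N) p ->
             Cmod (Cminus p (b 0%nat)) < 1/2).
  { intros N p HN Hp. pose proof (b_close b M d N p Hb ltac:(unfold N0 in HN; lia) Hp) as Hc.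
    fold K in Hc. specialize (HN2 N ltac:(unfold N0 in HN; lia)).
    rewrite Rabs_pos_eq in HN2 by (apply pow_le; lra).
    assert (K * (1/2)^N <= (K + 1) * (1 / (2 * (K + 1)))).
    { assert (0 <= (1/2)^N) by (apply pow_le; lra).
      apply Rle_trans with ((K+1) * (1/2)^N). nra. apply Rmult_le_compat_l; lra. }
    assert ((K + 1) * (1 / (2 * (K + 1))) = 1/2) by (field; lra).
    assert (K * (1/2)^N < 1/2 \/ K * (1/2)^N = 1/2) by lra.
    assert (K * (1/2)^N < 1/2).
    { assert (0 <= (1/2)^N) by (apply pow_le; lra).
      apply Rle_lt_trans with ((K+1) * (1/2)^N). nra.
      apply Rlt_le_trans with ((K + 1) * (1 / (2 * (K + 1)))). apply Rmult_lt_compat_l; lra. lra. }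
    lra. }
  destruct (HN1 N0 ltac:(unfold N0; lia)) as [p0 [Hp0 Hg0]].
  assert (pconst : forall N p, (N0 <= N)%nat -> is_series (u b N) p -> p = p0).
  { intros N p HN Hp. destruct (HN1 N ltac:(unfold N0 in HN; lia)) as [p' [Hp' Hg']].
    rewrite (C_series_unique _ _ _ Hp Hp').
    assert (E : npow_neg (S 1) p' = npow_neg (S 1) p0).
    { assert (Hl : - ln (INR (S 1)) <> 0) by (pose proof ln2_pos; lra).
      replace (npow_neg (S 1) p') with (Cmult (RtoC (/ - ln (INR (S 1)))) (Cmult (RtoC (- ln (INR (S 1)))) (npow_neg (S 1) p'))).
      2:{ rewrite Cmult_assoc, <- RtoC_mult, Rinv_l by auto. apply Cmult_1_l. }
      rewrite <- Hg', Hg0. rewrite Cmult_assoc, <- RtoC_mult, Rinv_l by auto. apply Cmult_1_l. }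
    apply npow_inj_local in E; auto.
    pose proof (close N p' HN Hp') as c1. pose proof (close N0 p0 (le_n _) Hp0) as c2.
    assert (Rabs (Im p' - Im p0) < 1).
    { assert (Im p' - Im p0 = Im (Cminus (Cminus p' (b 0%nat)) (Cminus p0 (b 0%nat)))) as ->
        by (destruct p', p0, (b 0%nat); simpl; ring).
      eapply Rle_lt_trans. apply im_le_Cmod'. unfold Cminus at 1.
      eapply Rle_lt_trans. apply Cmod_triangle. rewrite Cmod_opp. lra. }
    pose proof ln2_lt_1. pose proof ln2_pos. pose proof PI2_1.
    assert (Rabs (Im p' - Im p0) * ln (INR 2) <= 1 * 1).
    { apply Rmult_le_compat; try lra. apply Rabs_pos. }
    lra. }
  assert (Hp0b : p0 = b 0%nat).
  { assert (Cmod (Cminus p0 (b 0%nat)) <= 0).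
    { apply (two_geom _ K 0 (1/2) 0 N0 HK ltac:(lra) ltac:(lra) ltac:(lra)).
      intros N HN. destruct (HN1 N ltac:(unfold N0 in HN; lia)) as [p' [Hp' _]].
      rewrite <- (pconst N p' HN Hp').
      pose proof (b_close b M d N p' Hb ltac:(unfold N0 in HN; lia) Hp'). fold K in H. lra. }
    assert (Cminus p0 (b 0%nat) = 0%C) by (apply Cmod_eq_0; pose proof (Cmod_ge_0 (Cminus p0 (b 0%nat))); lra).
    change (@eq C p0 (b 0%nat)). replace p0 with (Cplus (Cminus p0 (b 0%nat)) (b 0%nat)) by ring. rewrite H0. ring. }
  assert (bser : forall N, (N0 <= N)%nat -> is_series (u b N) (b 0%nat)).
  { intros N HN. destruct (HN1 N ltac:(unfold N0 in HN; lia)) as [p' [Hp' _]].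
    rewrite <- Hp0b, <- (pconst N p' HN Hp'). auto. }
  split.
  -
    assert (Hs : forall n, (1 <= n)%nat -> sin (Im (b 0%nat) * ln (INR (S n))) = 0).
    { intros n Hn. destruct (get_rel 1 b HB n) as [gn Hgn].
      destruct (c1_value b n gn SA HB Hgn) as [Nn HNn].
      destruct (HNn (Nn + N0)%nat ltac:(lia)) as [p [Hp Hgp]].
      rewrite (C_series_unique _ _ _ Hp (bser (Nn + N0)%nat ltac:(lia))) in Hgp.
      apply im_zero_sin; auto. rewrite <- Hgp. apply (gamma_real b n gn SA Hgn). }
    apply log23. apply (Hs 1%nat); lia. apply (Hs 2%nat); lia.
  - intros k Hk.
    set (b' := fun i : nat => if Nat.eqb i 0 then RtoC 0 else b i).
    assert (Hb' : forall i, Cmod (b' i) <= M * INR (S i) ^ d).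
    { intros i. unfold b'. destruct (Nat.eqb i 0). rewrite Cmod_0.
      apply Rmult_le_pos; auto. apply pow_le. pose proof (INR_S_pos i); lra. auto. }
    assert (Hser : forall N, (N0 <= N)%nat -> is_series (u b' N) (RtoC 0)).
    { intros N HN.
      pose proof (is_series_minus _ _ _ _ (bser N HN)
                   (is_series_ind (K := C_AbsRing) (V := C_NormedModule) 0 (b 0%nat))) as H.
      match type of H with is_series _ ?v => replace v with (RtoC 0) in H by (symmetry; change (Cplus (b 0%nat) (Copp (b 0%nat)) = RtoC 0); ring) end. eapply is_series_ext. 2: exact H.
      intros i. unfold b', u. destruct (Nat.eqb i 0) eqn:Ei.
      - apply Nat.eqb_eq in Ei. subst i.
        change (Cplus (Cmult (b 0%nat) (RtoC (/ INR 1 ^ N))) (Copp (b 0%nat)) =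
                Cmult (RtoC 0) (RtoC (/ INR 1 ^ N))).
        replace (INR 1) with 1 by reflexivity. rewrite pow1, Rinv_1.
        ring.
      - change (Cplus (Cmult (b i) (RtoC (/ INR (S i) ^ N))) (Copp (RtoC 0)) =
                Cmult (b i) (RtoC (/ INR (S i) ^ N))). ring. }
    assert (b' k = 0%C).
    { apply (wid b' M d (S (S k)) 0 N0 Hb'); [|lia].
      intros N HN. exists (RtoC 0). split. apply Hser; auto.
      rewrite Cmult_0_r, Cmod_0. lra. }
    unfold b' in H. rewrite (proj2 (Nat.eqb_neq k 0) ltac:(lia)) in H. auto.
Qed.


Definition mu (c1 : R) (i : nat) : R := - ln (INR (S i)) * exp (- c1 * ln (INR (S i))).

Lemma npow_real (m : nat) (c : R) : npow_neg m (RtoC c) = RtoC (exp (- c * ln (INR m))).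
Proof.
  unfold npow_neg, RtoC. simpl. rewrite Rmult_0_l, cos_0, sin_0, Rmult_0_r, Rmult_1_r, Ropp_0.
  reflexivity.
Qed.

Lemma ln_le_x (x : R) : 0 < x -> ln x <= x.
Proof.
  intros H. pose proof (exp_ineq1_le (ln x)). rewrite exp_ln in H0 by auto. lra.
Qed.

Lemma if_ident (c1 : R) (b f g : nat -> C) :
  (forall s, DS_has b s (RtoC c1)) -> in_H2 f -> DPhi_rel 1 b f g ->
  forall i, g i = Cmult (f i) (RtoC (mu c1 i)).
Proof.
  intros Hb Hf Hg.
  destruct (H2_bound f Hf) as [Mf HMf].
  destruct (H2_bound g (rel_H2 _ _ _ _ Hg)) as [Mg HMg].
  destruct (INR_unbounded (- c1)) as [D HD].
  set (dd := fun i => Cminus (g i) (Cmult (f i) (RtoC (mu c1 i)))).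
  assert (Hdb : forall i, Cmod (dd i) <= (Mg + Mf) * INR (S i) ^ (S D)).
  { intros i. unfold dd. specialize (HMf i). specialize (HMg i). simpl in HMf, HMg.
    rewrite Rmult_1_r in HMf, HMg.
    set (x := INR (S i)).
    assert (Hx : 1 <= x) by (unfold x; rewrite S_INR; pose proof (pos_INR i); lra).
    assert (HL : 0 <= ln x) by (rewrite <- ln_1; apply ln_le; lra).
    assert (Hmu : Rabs (mu c1 i) <= x ^ S D).
    { unfold mu. fold x. rewrite Rabs_mult, Rabs_Ropp, (Rabs_pos_eq (ln x)) by auto.
      rewrite Rabs_pos_eq by (left; apply exp_pos). simpl.
      apply Rmult_le_compat; auto. left; apply exp_pos. apply ln_le_x; lra.
      rewrite <- (exp_ln x) at 2 by lra. rewrite <- exp_INR_mult.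
      apply exp_le. nra. }
    assert (H1 : 1 <= x ^ S D) by (apply pow_R1_Rle; lra).
    unfold Cminus. eapply Rle_trans. apply Cmod_triangle. rewrite Cmod_opp, Cmod_mult, Cmod_R.
    assert (0 <= Cmod (f i)) by apply Cmod_ge_0.
    assert (0 <= Cmod (g i)) by apply Cmod_ge_0.
    assert (Cmod (f i) * Rabs (mu c1 i) <= Mf * x ^ S D) by (apply Rmult_le_compat; auto; apply Rabs_pos).
    nra. }
  destruct Hg as [_ [sigma0 Hs]].
  destruct (INR_unbounded sigma0) as [N1 HN1].
  assert (Hser : forall N, (N1 <= N)%nat -> is_series (u dd N) (RtoC 0)).
  { intros N HN.
    assert (Hre : sigma0 < Re (RtoC (INR N))) by (simpl; apply le_INR in HN; lra).
    destruct (Hs _ Hre) as [p [Hp [_ [v [Hv Hw]]]]].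
    assert (Ep : p = RtoC c1) by (apply (C_series_unique _ _ _ Hp (Hb _))).
    rewrite Ep in Hw.
    assert (Hv' : is_series (u g N) v) by (eapply is_series_ext; [|exact Hv]; intros; apply dterm_nat).
    assert (Hw' : is_series (u (fun i => Cmult (f i) (RtoC (mu c1 i))) N) v).
    { eapply is_series_ext; [|exact Hw]. intros i. unfold dterm, dderiv, u.
      rewrite npow_factor by lia. rewrite npow_real. unfold mu.
      rewrite Nat.mul_1_l. rewrite <- !Cmult_assoc. f_equal.
      rewrite <- !RtoC_mult. f_equal. ring. }
    pose proof (is_series_minus _ _ _ _ Hv' Hw') as H.
    match type of H with is_series _ ?w => replace w with (RtoC 0) in H
      by (symmetry; change (Cplus v (Copp v) = RtoC 0); ring) end.
    eapply is_series_ext; [|exact H]. intros i. unfold u, dd.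
    change (Cplus (Cmult (g i) (RtoC (/ INR (S i) ^ N)))
                  (Copp (Cmult (Cmult (f i) (RtoC (mu c1 i))) (RtoC (/ INR (S i) ^ N)))) =
            Cmult (Cminus (g i) (Cmult (f i) (RtoC (mu c1 i)))) (RtoC (/ INR (S i) ^ N))).
    ring. }
  intros i.
  assert (dd i = RtoC 0).
  { apply (wid dd (Mg + Mf) (S D) (S (S i)) 0 N1 Hdb); [|lia].
    intros N HN. exists (RtoC 0). split. apply Hser; auto.
    rewrite Cmult_0_r, Cmod_0. lra. }
  unfold dd in H. replace (g i) with (Cplus (Cminus (g i) (Cmult (f i) (RtoC (mu c1 i)))) (Cmult (f i) (RtoC (mu c1 i)))) by ring.
  rewrite H. ring.
Qed.


Theorem theorem4p1 (c0 : nat) (b : nat -> C)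
  (hconv : exists s0 : C, ex_series (dterm b s0))
  (hbdd : DPhi_bounded c0 b) :
  DPhi_selfadjoint c0 b <->
  (c0 = 1%nat /\ exists c1 : R, forall s : C, DS_has b s (RtoC c1)).
Proof.
  split.
  - intros SA.
    destruct c0 as [|[|c0']].
    + exfalso. apply (case_c0 0 b SA hbdd). lia.
    + split; auto. destruct (case_c1 b SA hbdd) as [Him Hz].
      exists (Re (b 0%nat)). intros s. unfold DS_has.
      assert (H := is_series_ind_gen (dterm b s) 0).
      cbv beta in H.
      assert (E0 : dterm b s 0 = RtoC (Re (b 0%nat))).
      { unfold dterm, npow_neg. replace (INR 1) with 1 by reflexivity. rewrite ln_1.
        rewrite !Rmult_0_r, exp_0, cos_0, sin_0, Rmult_0_r, Rmult_1_r, Ropp_0.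
        destruct (b 0%nat) as [x y]. simpl in Him. subst y.
        unfold Cmult, RtoC. simpl. f_equal; ring. }
      rewrite E0 in H. apply H.
      intros k Hk. unfold dterm. rewrite (Hz k ltac:(lia)). rewrite Cmult_0_l. reflexivity.
    + exfalso. apply (case_c0 (S (S c0')) b SA hbdd). lia.
  - intros [-> [c1 Hc1]].
    intros f h g k Hf Hh Hg Hk.
    pose proof (if_ident c1 b f g Hc1 Hf Hg) as Eg.
    pose proof (if_ident c1 b h k Hc1 Hh Hk) as Ek.
    unfold H2inner. f_equal; apply Series_ext; intros i; rewrite Eg, Ek;
      destruct (f i) as [x y], (h i) as [x' y']; unfold Cmult, Cconj, RtoC; simpl; ring.
Qed.
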